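(* Let $R$ be a random length-$k$ ranking generated by a PL+C model. For items $i,j\in\mathcal U$, write $i\succ_R j$ if $i$ is ranked higher than $j$ in $R$. If $\Pr(i\succ_R j\mid i,j\in R)>1/2$, then $u_i>u_j$.
   Context: PL+C model: universe $\mathcal U=\{1,\dots,n\}$, fixed ranking length $k\le n$. Each item $h$ has a utility $u_h\in\mathbb R$ and a consideration probability $p_h\in(0,1]$. A consideration set $C$ is drawn by including each item independently with probability $p_h$, conditioned on $|C|\ge k$. Given $C$, a length-$k$ ranking $r=(r_1,\dots,r_k)$ of distinct items is drawn with Plackett--Luce probability $\Pr_{PL}(r\mid C)=\prod_{t=1}^k \frac{\exp(u_{r_t})}{\sum_{h\in C\setminus\{r_1,\dots,r_{t-1}\}}\exp(u_h)}$ if all $r_t\in C$, else $0$. ''$i,j\in R$'' means both items appear in the ranking $R$. *)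

(* Defs.v *)
From HB Require Import structures.
From mathcomp Require Import all_boot all_order all_algebra.
From mathcomp Require Import all_classical all_reals all_analysis.
Set Implicit Arguments. Unset Strict Implicit. Unset Printing Implicit Defensive.
Import Order.TTheory GRing.Theory Num.Theory.
Local Open Scope ring_scope.

Section PLC.
Variables (R : realType) (n k : nat) (u p : 'I_n -> R).

(* Unconditioned probability of the consideration set C
   (independent inclusion with probabilities p h). *)
Definition probC (C : {set 'I_n}) : R :=
  (\prod_(h in C) p h) * \prod_(h in ~: C) (1 - p h).

Definition Zk : R := \sum_(C : {set 'I_n} | (k <= #|C|)%N) probC C.

Definition probC_cond (C : {set 'I_n}) : R :=
  if (k <= #|C|)%N then probC C / Zk else 0.

(* A length-k ranking: r t is the item at position t (0-based).
   Rankings are required to consist of distinct items (injective r). *)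
Definition ranking := {ffun 'I_k -> 'I_n}.

Definition PL (C : {set 'I_n}) (r : ranking) : R :=
  if injectiveb r && [forall t, r t \in C] then
    \prod_(t < k)
      (expR (u (r t)) /
        \sum_(h in C :\: [set r s | s in [pred s : 'I_k | (s < t)%N]]) expR (u h))
  else 0.

Definition probR (r : ranking) : R :=
  \sum_(C : {set 'I_n}) probC_cond C * PL C r.

Definition PrEv (E : pred ranking) : R :=
  \sum_(r : ranking | injectiveb r && E r) probR r.

Definition ranked_above (i j : 'I_n) (r : ranking) : bool :=
  [exists s : 'I_k, exists t : 'I_k, [&& (s < t)%N, r s == i & r t == j]].

Definition both_in (i j : 'I_n) (r : ranking) : bool :=
  (i \in codom r) && (j \in codom r).

Definition prob_above_given_both (i j : 'I_n) : R :=
  PrEv (fun r => ranked_above i j r && both_in i j r) / PrEv (both_in i j).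

End PLC.

(* Main.v *)
Require Import Defs.
From HB Require Import structures.
From mathcomp Require Import all_boot all_order all_algebra.
From mathcomp Require Import all_classical all_reals all_analysis.
From mathcomp Require Import lra fingroup perm.
Import Order.TTheory GRing.Theory Num.Theory.
Local Open Scope ring_scope.

Section Proof.
Variables (R : realType) (n k : nat) (u p : 'I_n -> R) (i j : 'I_n).

Definition sw (r : ranking n k) : ranking n k := [ffun t => tperm i j (r t)].

Lemma Dsplit (C : {set 'I_n}) (r : ranking n k) (P : pred 'I_k) :
  injective r -> (forall t, r t \in C) ->
  \sum_(h in C :\: [set r s | s in P]) expR (u h) =
  \sum_(h in C) expR (u h) - \sum_(s in P) expR (u (r s)).
Proof.
move=> Hinj HC.
rewrite (big_setID [set r s | s in P] (fun h => expR (u h)) (A := C)).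
have Hsub : [set r s | s in P] \subset C.
  by apply/fintype.subsetP => x /imsetP [s _ ->]; exact: HC.
rewrite (finset.setIidPr Hsub).
rewrite big_imset; last by move=> x y _ _; exact: Hinj.
idtac.
rewrite /=; lra.
Qed.

Lemma PL_ge0 C (r : ranking n k) : 0 <= PL u C r.
Proof.
rewrite /PL; case: ifP => // _; apply: prodr_ge0 => t _.
apply: divr_ge0; first exact: expR_ge0.
apply: sumr_ge0 => h _; exact: expR_ge0.
Qed.


Lemma neq_ord (a b : 'I_k) : (a < b)%N -> a != b.
Proof. by move=> ab; apply/eqP => e; rewrite e ltnn in ab. Qed.

Lemma sw_pos (r : ranking n k) (s t0 : 'I_k) : injective r -> r s = i -> r t0 = j ->
  forall t, sw r t = r (tperm s t0 t).
Proof.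
move=> Hinj rs rt t; rewrite ffunE.
case: (tpermP s t0 t) => [->|->|ns nt].
- by rewrite rs rt tpermL.
- by rewrite rs rt tpermR.
rewrite tpermD //; apply/eqP => e.
  by apply: ns; apply: Hinj; rewrite rs e.
by apply: nt; apply: Hinj; rewrite rt e.
Qed.

Lemma Ssw (r : ranking n k) (s t0 t : 'I_k) : injective r -> (s < t0)%N -> r s = i -> r t0 = j ->
  u i <= u j ->
  \sum_(q in [pred q : 'I_k | (q < t)%N]) expR (u (r q)) <=
  \sum_(q in [pred q : 'I_k | (q < t)%N]) expR (u (r (tperm s t0 q))).
Proof.
move=> Hinj st rs rt uij.
case: (leqP t s) => [ts|st'].
  rewrite le_eqVlt; apply/orP; left; apply/eqP; apply: eq_bigr => q; rewrite inE => qt.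
  rewrite tpermD // eq_sym; apply: neq_ord => //.
  exact: leq_trans qt ts.
  exact: leq_trans qt (leq_trans ts (ltnW st)).
case: (ltnP t0 t) => [t0t | tt0].
  rewrite [leLHS](reindex_inj (@perm_inj _ (tperm s t0))) /=.
  rewrite le_eqVlt; apply/orP; left; apply/eqP; apply: eq_bigl => q; rewrite !inE.
  by case: tpermP => [->|->|_ _]; rewrite ?st' ?t0t.
rewrite (bigD1 s) 1?inE //= [leRHS](bigD1 s) 1?inE //= tpermL rs rt.
apply: lerD; first by rewrite ler_expR.
rewrite le_eqVlt; apply/orP; left; apply/eqP; apply: eq_bigr => q; rewrite inE => /andP [qt qs].
rewrite tpermD // eq_sym //; apply: neq_ord; exact: leq_trans qt tt0.
Qed.

Lemma PL_swap C (r : ranking n k) (s t0 : 'I_k) : injective r -> (s < t0)%N -> r s = i -> r t0 = j ->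
  u i <= u j -> PL u C r <= PL u C (sw r).
Proof.
move=> Hinj st rs rt uij.
have Hsw := @sw_pos r s t0 Hinj rs rt.
have Hinj' : injective (sw r) by move=> x y; rewrite !Hsw => /Hinj /perm_inj.
rewrite {1}/PL; case: ifP => [/andP [_ /forallP HC]|_]; last exact: PL_ge0.
have HC' : forall t, sw r t \in C by move=> t; rewrite Hsw HC.
rewrite /PL (introT (injectiveP _) Hinj').
have -> : [forall t, sw r t \in C] by apply/forallP.
rewrite /= !big_split /=.
have -> : \prod_(t < k) expR (u (sw r t)) = \prod_(t < k) expR (u (r t)).
  under eq_bigr do rewrite Hsw.
  by symmetry; exact: (reindex_inj (@perm_inj _ (tperm s t0))).
apply: ler_pM.
- by apply: prodr_ge0 => t _; exact: expR_ge0.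
- by apply: prodr_ge0 => t _; rewrite invr_ge0; apply: sumr_ge0 => h _; exact: expR_ge0.
- by [].
apply: ler_prod => t _; apply/andP; split.
  by rewrite invr_ge0; apply: sumr_ge0 => h _; exact: expR_ge0.
set Dr := (X in X^-1 <= _). set Dr' := (X in _ <= X^-1).
have Dpos' : 0 < Dr'.
  rewrite /Dr' (bigD1 (sw r t)) /=; last first.
    rewrite !inE HC' andbT; apply/imsetP => -[s' Hs' /Hinj' e].
    by rewrite -e inE ltnn in Hs'.
  apply: (@lt_le_trans _ _ (expR (u (sw r t)))); first exact: expR_gt0. rewrite lerDl.
  by apply: sumr_ge0 => h _; exact: expR_ge0.
have Dle : Dr' <= Dr.
  rewrite /Dr /Dr' !Dsplit //.
  have := @Ssw r s t0 t Hinj st rs rt uij.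
  under [X in _ <= X -> _]eq_bigr do rewrite -Hsw.
  move=> H; lra.
rewrite lef_pV2 // posrE //; exact: lt_le_trans Dpos' Dle.
Qed.


Hypothesis Hp : forall h, 0 < p h <= 1.

Lemma probC_ge0 C : 0 <= probC p C.
Proof.
rewrite /probC; apply: mulr_ge0; apply: prodr_ge0 => h _; have /andP [h1 h2] := Hp h.
  exact: ltW.
by rewrite subr_ge0.
Qed.

Lemma probC_cond_ge0 C : 0 <= probC_cond k p C.
Proof.
rewrite /probC_cond; case: ifP => // _; apply: divr_ge0; first exact: probC_ge0.
by apply: sumr_ge0 => D _; exact: probC_ge0.
Qed.

Lemma probR_ge0 (r : ranking n k) : 0 <= probR u p r.
Proof. by apply: sumr_ge0 => C _; apply: mulr_ge0; [exact: probC_cond_ge0 | exact: PL_ge0]. Qed.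

Lemma probR_swap (r : ranking n k) : injective r -> ranked_above i j r -> u i <= u j ->
  probR u p r <= probR u p (sw r).
Proof.
move=> Hinj /existsP [s /existsP [t0 /and3P [st /eqP rs /eqP rt]]] uij.
apply: ler_sum => C _; apply: ler_wpM2l; first exact: probC_cond_ge0.
exact: (@PL_swap C r s t0).
Qed.

Lemma fwd (r : ranking n k) :
  injectiveb r && (ranked_above i j r && both_in i j r) ->
  injectiveb (sw r) && (ranked_above j i (sw r) && both_in i j (sw r)).
Proof.
move=> /and3P [/injectiveP Hinj Hab _].
move: (Hab) => /existsP [s /existsP [t0 /and3P [st /eqP rs /eqP rt]]].
apply/and3P; split.
- by apply/injectiveP => x y; rewrite !ffunE => /perm_inj /Hinj.
- apply/existsP; exists s; apply/existsP; exists t0.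
  by rewrite st !ffunE rs rt tpermL tpermR !eqxx.
- apply/andP; split; apply/codomP.
  + by exists t0; rewrite ffunE rt tpermR.
  + by exists s; rewrite ffunE rs tpermL.
Qed.

Lemma disj (r : ranking n k) : injective r -> ranked_above j i r -> ~~ ranked_above i j r.
Proof.
move=> Hinj /existsP [s /existsP [t /and3P [st /eqP rs /eqP rt]]].
apply/negP => /existsP [s' /existsP [t' /and3P [st' /eqP rs' /eqP rt']]].
have e1 : s = t' by apply: Hinj; rewrite rs rt'.
have e2 : t = s' by apply: Hinj; rewrite rt rs'.
subst; have := ltn_trans st st'; by rewrite ltnn.
Qed.

End Proof.

Theorem lemma2 (R : realType) (n k : nat) (u p : 'I_n -> R) (i j : 'I_n) :
  (k <= n)%N ->
  (forall h, 0 < p h <= 1) ->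
  prob_above_given_both k u p i j > 1 / 2 ->
  u i > u j.
Proof.
move=> _ Hp H; rewrite ltNge; apply/negP => uij; move: H; rewrite ltNge; apply/negP; rewrite negbK /prob_above_given_both.
set A := PrEv u p (fun r => ranked_above i j r && both_in i j r).
set T := PrEv u p (both_in i j).
pose B := \sum_(r : ranking n k | injectiveb r && (ranked_above j i r && both_in i j r)) probR u p r.
have A0 : 0 <= A by apply: sumr_ge0 => r _; exact: probR_ge0.
have B0 : 0 <= B by apply: sumr_ge0 => r _; exact: probR_ge0.
have AB : A <= B.
  have swK : involutive (@sw n k i j) by move=> r; apply/ffunP => t; rewrite !ffunE tpermK.
  rewrite /B (reindex_inj (inv_inj swK)) /A /PrEv !big_mkcond /=.
  rewrite [leRHS]big_mkcond; apply: ler_sum => r _; case: ifP => HA.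
    rewrite (@fwd n k i j r HA); move: HA => /and3P [/injectiveP Hinj Hab _].
    exact: probR_swap.
  by case: ifP => _ //; exact: probR_ge0.
have ABT : A + B <= T.
  rewrite /T /PrEv (bigID (ranked_above i j)) /=.
  apply: lerD.
    rewrite le_eqVlt; apply/orP; left; apply/eqP; apply: eq_bigl => r.
    by case: (injectiveb r); case: (ranked_above i j r); case: (both_in i j r).
  rewrite /B big_mkcond [leRHS]big_mkcond /=; apply: ler_sum => r _.
  case: ifP => HB.
    move: (HB) => /and3P [Hi Hab Hb].
    by rewrite Hi Hb (@disj n k i j r (elimT (injectiveP _) Hi) Hab).
  by case: ifP => _ //; exact: probR_ge0.
have [T0|Tn0] := eqVneq T 0.
  by rewrite T0 invr0 mulr0; lra.
have Tp : 0 < T by rewrite lt_neqAle eq_sym Tn0 /=; lra.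
rewrite ler_pdivrMr //; lra.
Qed.
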